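(* Let $q \ge 2$, $n$, $a$, $b$ be nonnegative integers with $b \ge 1$ and $a + qb \le n - 1$. Then $\kappa^*(A_{q,n,a,b}) \le \kappa^*(A_{q,n,a+2,b-1})$.
   Context: For integers $q \ge 2$, $n \ge 1$, $0 \le a \le n$, $b \ge 0$, the $q$-ary $n$-symbol $a$-erasure $b$-substitution channel $A_{q,n,a,b}$ has input set $[q]^n$ (where $[q]=\{0,\dots,q-1\}$) and output set the strings $y \in ([q]\cup\{*\})^n$ having exactly $a$ positions equal to the erasure symbol $*$; $(A_{q,n,a,b})_{x,y} = 1$ iff $|\{i : y_i \ne *,\ y_i \ne x_i\}| \le b$. For a $0/1$ matrix $A \in \{0,1\}^{X\times Y}$, $\kappa^*(A) = \min\{\mathbf{1}^T z : z\in \mathbb{R}^Y,\ z\ge\mathbf{0},\ Az\ge\mathbf{1}\}$. *)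

(* Defs.v *)
From mathcomp Require Import all_boot all_order all_algebra.
From mathcomp Require Import all_classical all_reals.
Set Implicit Arguments. Unset Strict Implicit. Unset Printing Implicit Defensive.
Import Order.TTheory GRing.Theory Num.Theory.
Local Open Scope ring_scope.
Local Open Scope classical_set_scope.

Definition inT (q n : nat) : finType := {ffun 'I_n -> 'I_q}.

(* Output set: strings over [q] ∪ {*} (None = erasure symbol * ) with exactly a erasures. *)
Definition outT (q n a : nat) : finType :=
  {y : {ffun 'I_n -> option 'I_q} | #|[set i | y i == None]| == a}.

Definition chan (q n a b : nat) (x : inT q n) (y : outT q n a) : bool :=
  (#|[set i | (val y i != None) && (val y i != Some (x i))]| <= b)%N.

Definition kappa_star (R : realType) (X Y : finType) (A : X -> Y -> bool) : R :=
  inf [set s : R | exists z : Y -> R,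
        (forall y, 0 <= z y) /\
        (forall x, 1 <= \sum_(y : Y) (A x y)%:R * z y) /\
        s = \sum_(y : Y) z y].

(* Main.v *)
Require Import Defs.
From mathcomp Require Import all_boot all_order all_algebra.
From mathcomp Require Import all_classical all_reals.
From mathcomp Require Import zify.
Set Implicit Arguments. Unset Strict Implicit. Unset Printing Implicit Defensive.
Import Order.TTheory GRing.Theory Num.Theory.
Local Open Scope nat_scope.
Section S.
Variables (I T : finType) (P Q : I -> pred T).
Hypothesis PQ : forall i v, P i v -> ~~ Q i v.

Lemma card_fam (F : I -> pred T) :
  #|[set f : {ffun I -> T} | [forall i, F i (f i)]]| = \prod_i #|F i|.
Proof.
have := @card_family I (fun _ => T) F.
rewrite foldrE big_map big_enum /= => <-.
by apply: eq_card => f; rewrite inE; apply/forallP/familyP.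
Qed.

Lemma count_ball b :
  #|[set f : {ffun I -> T} | [forall i, P i (f i) || Q i (f i)] & (#|[set i | Q i (f i)]| <= b)]|
  = \sum_(S : {set I} | #|S| <= b) \prod_i (if i \in S then #|Q i| else #|P i|).
Proof.
rewrite -sum1_card (partition_big (fun f : {ffun I -> T} => [set i | Q i (f i)]) (fun S : {set I} => #|S| <= b)); last first.
  by move=> f; rewrite inE => /andP[].
apply: eq_bigr => S Sb.
rewrite (eq_bigr (fun i => #|(if i \in S then Q i else P i)|)); last by move=> i _; case: (i \in S).
rewrite sum1_card -(card_fam (fun i => if i \in S then Q i else P i)).
apply: eq_card => f; rewrite unfold_in [in LHS]inE [in RHS]inE /=.
have E : (forall i, if i \in S then Q i (f i) else P i (f i)) -> [set i | Q i (f i)] = S.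
  move=> H; apply/setP => i; rewrite inE; have := H i; case: (i \in S) => // /PQ; by case: (Q i (f i)).
apply/idP/idP.
- case/andP => /andP[/forallP H _] /eqP <-; apply/forallP => i; rewrite ?inE.
  by have := H i; case E1: (Q i (f i)) => //; rewrite orbF.
- move/forallP => H.
  have H' : forall i, if i \in S then Q i (f i) else P i (f i) by move=> i; have := H i; case: (i \in S).
  rewrite (E H') Sb eqxx !andbT; apply/forallP => i; have := H' i; case: (i \in S) => -> //; by rewrite orbT.
Qed.
End S.

Definition V (r m c : nat) := \sum_(k < c.+1) 'C(m, k) * r ^ k.

Lemma V0 r m : V r m 0 = 1.
Proof. by rewrite /V big_ord_recl big_ord0 bin0 expn0 addn0. Qed.

Lemma VrS r m c : V r m c.+1 = V r m c + 'C(m, c.+1) * r ^ c.+1.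
Proof. by rewrite /V big_ord_recr. Qed.

Lemma VSS r p c : V r p.+1 c.+1 = V r p c.+1 + r * V r p c.
Proof.
rewrite /V big_ord_recl [in RHS]big_ord_recl !bin0 expn0 big_distrr -addnA; congr (_ + _).
rewrite -big_split /=; apply: eq_bigr => k _.
rewrite /bump leq0n add1n binS mulnDl expnS; lia.
Qed.

Lemma Vineq q m b : 2 <= q -> 1 <= b -> q * b + 1 <= m ->
  q ^ 2 * V (q - 1) (m - 2) (b - 1) <= V (q - 1) m b.
Proof.
move=> q2 b1 hm.
have [p pe] : exists p, m = p.+2 by exists (m - 2); lia.
subst m.
have [r qr] : exists r, q = r.+1 by exists q.-1; lia.
subst q.
case: b b1 hm => [//|c] _ hm.
rewrite subn2 /= !subn1 /=.
case: c hm => [|d] hm.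
  rewrite V0 VrS V0 bin1 !expnS !expn0.
  nia.
rewrite !VSS !VrS.
set A := V r p d.
set x := 'C(p, d.+1); set y := 'C(p, d.+2).
have h : d.+2 * y = (p - d.+1) * x by rewrite /x /y mul_bin_left.
have hxy : r * x <= y.
  rewrite -(leq_pmul2l (ltn0Sn d.+1)) h mulnA.
  apply: leq_mul => //. lia.
rewrite !expnS !expn0.
set R := r ^ d.
have hh : r * x * (r * (r * R)) <= y * (r * (r * R)) by apply: leq_mul.
nia.
Qed.

Lemma sum_sub (I : finType) (C : {set I}) r b :
 \sum_(S : {set I} | (S \subset C) && (#|S| <= b)) r ^ #|S| = V r #|C| b.
Proof.
rewrite (partition_big (fun S : {set I} => (inord #|S| : 'I_b.+1)) xpredT) //.
apply: eq_bigr => k _.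
rewrite (eq_bigr (fun _ => r ^ k)); last first.
  by move=> S /andP[/andP[_ Sb] /eqP <-]; rewrite inordK.
rewrite sum_nat_const -cards_draws; congr (_ * _).
apply: eq_card => S; rewrite unfold_in [in RHS]inE /=.
case: (S \subset C) => //=.
apply/idP/idP.
- by case/andP => Sb /eqP <-; rewrite inordK.
- move/eqP => Sk; have Sb : #|S| <= b by rewrite Sk -ltnS.
  by rewrite Sb /=; apply/eqP/val_inj; rewrite /= inordK.
Qed.

Lemma eval_sum (I : finType) (E : {set I}) (r c b : nat) :
 \sum_(S : {set I} | #|S| <= b)
    \prod_i (if i \in S then (if i \in E then 0 else r) else (if i \in E then c else 1))
 = c ^ #|E| * V r #|~: E| b.
Proof.
rewrite -sum_sub big_distrr /=.
rewrite (bigID (fun S : {set I} => S \subset ~: E)) /=.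
rewrite [X in _ + X]big1 ?addn0; last first.
  move=> S /andP[_ /subsetPn [i iS iE]].
  rewrite (bigD1 i) //= iS; move: iE; rewrite inE negbK => -> //.
rewrite [RHS](eq_bigl (fun S : {set I} => (#|S| <= b) && (S \subset ~: E))); last first.
  by move=> S; rewrite andbC.
apply: eq_bigr => S /andP[_ SE].
rewrite (eq_bigr (fun i => (if i \in S then r else 1) * (if i \in E then c else 1))); last first.
  move=> i _; case: (boolP (i \in S)) => iS.
    by have := fintype.subsetP SE i iS; rewrite inE => /negbTE ->; rewrite muln1.
  by rewrite mul1n.
rewrite big_split /= -!big_mkcond /= !prod_nat_const mulnC.
by [].
Qed.
Lemma cardcl (T : finType) (p : pred T) : #|[set x | p x]%classic| = #|[set x | p x]|.
Proof. apply: eq_card => x. by rewrite [RHS]inE /in_mem /mem /= /in_set asboolb. Qed.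


Lemma col_count q n e b (y : outT q n e) :
  #|[set x : inT q n | @chan q n e b x y]| = q ^ e * V (q - 1) (n - e) b.
Proof.
set E := [set i | val y i == None].
have cE : #|E| = e by apply/eqP; have := valP y; rewrite cardcl.
have cC : #|~: E| = n - e by have := cardsC E; rewrite card_ord; lia.
pose P := fun (i : 'I_n) (v : 'I_q) => (val y i == None) || (val y i == Some v).
pose Q := fun (i : 'I_n) (v : 'I_q) => (val y i != None) && (val y i != Some v).
have PQ : forall i v, P i v -> ~~ Q i v by move=> i v; rewrite /P /Q negb_and !negbK.
have := count_ball PQ b.
have -> : [set f : {ffun 'I_n -> 'I_q} | [forall i, P i (f i) || Q i (f i)] & (#|[set i | Q i (f i)]| <= b)]
   = [set x : inT q n | @chan q n e b x y].
  apply/setP => x; rewrite !inE /chan cardcl.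
  have -> : [forall i, P i (x i) || Q i (x i)].
    apply/forallP => i; rewrite /P /Q.
    by case: (val y i == None); case: (val y i == Some (x i)).
  by [].
move=> ->; rewrite -cC -cE -eval_sum.
apply: eq_bigr => S _; apply: eq_bigr => i _.
rewrite /P /Q inE.
case: (val y i) => [u|] /=.
- case: (i \in S).
  + rewrite subn1 -[q in q.-1]card_ord -(cardC1 u); apply: eq_card => v; rewrite !inE /=.
    by rewrite unfold_in /= (inj_eq (@Some_inj _)) eq_sym.
  + rewrite -(card1 u); apply: eq_card => v; rewrite !inE /=.
    by rewrite unfold_in /= (inj_eq (@Some_inj _)) eq_sym.
- case: (i \in S).
  + by apply: eq_card0 => v; rewrite !inE.
  + by rewrite -[q in RHS]card_ord; apply: eq_card => v; rewrite !inE.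
Qed.

Lemma transfer q n a (p : pred {ffun 'I_n -> option 'I_q}) :
  (forall f, p f -> #|[set i | f i == None]| = a) ->
  #|[set y : outT q n a | p (val y)]| = #|[set f | p f]|.
Proof.
move=> H; rewrite -(card_imset _ val_inj); congr (#|pred_of_set _|).
apply/setP => f; rewrite inE; apply/imsetP/idP.
- by case=> y; rewrite inE => py ->.
- move=> pf.
  have Hf : #|[set i | f i == None]%classic| == a by rewrite cardcl H.
  by exists (exist _ f Hf); rewrite ?inE.
Qed.

Lemma row_count q n a b (x : inT q n) (E0 : {set 'I_n}) : #|E0| = a ->
  #|[set y : outT q n a | ([set i | val y i == None] == E0) && @chan q n a b x y]|
  = V (q - 1) (n - a) b.
Proof.
move=> cE.
have cC : #|~: E0| = n - a by have := cardsC E0; rewrite card_ord; lia.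
pose p := (fun f : {ffun 'I_n -> option 'I_q} => ([set i | f i == None] == E0) &&
   (#|[set i | (f i != None) && (f i != Some (x i))]| <= b)).
have -> : #|[set y : outT q n a | ([set i | val y i == None] == E0) && @chan q n a b x y]|
   = #|[set y : outT q n a | p (val y)]|.
  by apply: eq_card => y; rewrite !inE /chan cardcl.
rewrite transfer; last by move=> f /andP[/eqP -> _].
rewrite /p.
pose P := fun (i : 'I_n) (v : option 'I_q) => if i \in E0 then v == None else v == Some (x i).
pose Q := fun (i : 'I_n) (v : option 'I_q) => (i \notin E0) && (v != None) && (v != Some (x i)).
have PQ : forall i v, P i v -> ~~ Q i v.
  by move=> i v; rewrite /P /Q; case: (i \in E0) => //= /eqP ->; rewrite eqxx andbF.
have := count_ball PQ b.
have -> : [set f : {ffun 'I_n -> option 'I_q} | [forall i, P i (f i) || Q i (f i)] & (#|[set i | Q i (f i)]| <= b)]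
   = [set f : {ffun 'I_n -> option 'I_q} | ([set i | f i == None] == E0) &&
   (#|[set i | (f i != None) && (f i != Some (x i))]| <= b)].
  apply/setP => f; rewrite !inE.
  have E1 : [forall i, P i (f i) || Q i (f i)] = ([set i | f i == None] == E0).
    apply/forallP/eqP.
    - move=> H; apply/setP => i; rewrite inE; have := H i; rewrite /P /Q.
      by case: (i \in E0) => /=; [rewrite orbF | case: (f i) => //= u; rewrite andbT].
    - move=> hE i; rewrite /P /Q -hE inE.
      by case: (f i) => [u|] //=; case: (Some u == Some (x i)).
  rewrite E1; case: (boolP ([set i | f i == None] == E0)) => //= /eqP hE.
  congr (_ <= _); apply: eq_card => i; rewrite !inE /Q -hE inE.
  by case: (f i).
move=> ->; rewrite -cC; transitivity (1 ^ #|E0| * V (q - 1) #|~: E0| b); last by rewrite exp1n mul1n.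
rewrite -eval_sum.
apply: eq_bigr => S _; apply: eq_bigr => i _.
rewrite /P /Q.
case: (i \in E0) => /=.
- case: (i \in S).
  + by apply: eq_card0.
  + by rewrite -(card1 (None : option 'I_q)); apply: eq_card => v; rewrite unfold_in /= ?inE.
- case: (i \in S).
  + have := cardC (pred2 None (Some (x i))); rewrite card2 card_option card_ord /=.
    have -> : #|[predC pred2 None (Some (x i))]| = #|(fun v : option 'I_q => (v != None) && (v != Some (x i)))|.
      by apply: eq_card => v; rewrite !unfold_in /= negb_or.
    set X := #|_|; lia.
  + by rewrite -(card1 (Some (x i))); apply: eq_card => v; rewrite unfold_in /= ?inE.
Qed.

Lemma tot_count q n a (E0 : {set 'I_n}) : #|E0| = a ->
  #|[set y : outT q n a | [set i | val y i == None] == E0]| = q ^ (n - a).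
Proof.
move=> cE.
have cC : #|~: E0| = n - a by have := cardsC E0; rewrite card_ord; lia.
rewrite (@transfer q n a (fun f : {ffun 'I_n -> option 'I_q} => [set i | f i == None] == E0)); last first.
  by move=> f /eqP ->.
pose F := fun (i : 'I_n) (v : option 'I_q) => if i \in E0 then v == None else v != None.
have -> : [set f : {ffun 'I_n -> option 'I_q} | [set i | f i == None] == E0]
   = [set f : {ffun 'I_n -> option 'I_q} | [forall i, F i (f i)]].
  apply/setP => f; rewrite !inE; apply/eqP/forallP.
  - by move=> hE i; rewrite /F -hE inE; case: (f i).
  - move=> H; apply/setP => i; rewrite inE; have := H i; rewrite /F.
    by case: (i \in E0); case: (f i).
rewrite card_fam -cC -prod_nat_const [RHS]big_mkcond /=.
apply: eq_bigr => i _; rewrite /F inE.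
case: (i \in E0) => /=.
- by rewrite -(card1 (None : option 'I_q)); apply: eq_card => v; rewrite unfold_in /= ?inE.
- have := cardC (pred1 (None : option 'I_q)); rewrite card1 card_option card_ord.
  have -> : #|[predC pred1 (None : option 'I_q)]| = #|(fun v : option 'I_q => v != None)|.
    by apply: eq_card => v; rewrite !unfold_in.
  set X := #|_|; lia.
Qed.


Local Open Scope ring_scope.

Lemma sum_bool (T : finType) (p : pred T) :
  (\sum_(y : T) (p y : nat) = #|[set y | p y]|)%N.
Proof.
rewrite (eq_bigr (fun y => if p y then 1%N else 0%N)); last by move=> y _; case: (p y).
by rewrite -big_mkcond /= sum1_card; apply: eq_card => y; rewrite inE.
Qed.

Lemma V_gt0 r m c : (0 < V r m c)%N.
Proof. by rewrite /V big_ord_recl bin0 expn0 mul1n. Qed.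

Lemma exE0 n a : (a <= n)%N -> exists E0 : {set 'I_n}, #|E0| = a.
Proof.
move=> an.
have : (0 < #|[set A : {set 'I_n} | #|A| == a]|)%N by rewrite card_draws card_ord bin_gt0.
by case/card_gt0P => E0; rewrite inE => /eqP; exists E0.
Qed.

Lemma feas (R : realType) q n a b : (a <= n)%N ->
  exists z : outT q n a -> R, (forall y, 0 <= z y) /\
    (forall x, 1 <= \sum_(y : outT q n a) (@chan q n a b x y)%:R * z y) /\
    (q ^ (n - a))%:R / (V (q - 1) (n - a) b)%:R = \sum_(y : outT q n a) z y.
Proof.
move=> an; have [E0 cE] := exE0 an.
set N := V (q - 1) (n - a) b.
have N0 : 0 < N%:R :> R by rewrite ltr0n V_gt0.
pose cnd := fun y : outT q n a => [set i | val y i == None] == E0.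
exists (fun y => (cnd y : nat)%:R / N%:R); split; [|split].
- by move=> y; rewrite divr_ge0 ?ler0n // ltW.
- move=> x.
  rewrite (eq_bigr (fun y => ((cnd y && @chan q n a b x y) : nat)%:R / N%:R)); last first.
    by move=> y _; case: (cnd y); case: (chan _ _ _); rewrite /= ?mul1r ?mul0r.
  rewrite -mulr_suml -natr_sum sum_bool row_count // divff //.
  by rewrite lt0r_neq0.
- rewrite -mulr_suml -natr_sum sum_bool -(tot_count q cE).
  by [].
Qed.

Lemma lb (R : realType) q n e c (z : outT q n e -> R) :
  (forall y, 0 <= z y) ->
  (forall x, 1 <= \sum_(y : outT q n e) (@chan q n e c x y)%:R * z y) ->
  (q ^ n)%:R <= (q ^ e * V (q - 1) (n - e) c)%:R * \sum_(y : outT q n e) z y.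
Proof.
move=> z0 cov.
have -> : (q ^ n)%:R = \sum_(x : inT q n) (1 : R).
  by rewrite sumr_const card_ffun !card_ord.
apply: le_trans (ler_sum _ (fun x _ => cov x)) _.
rewrite exchange_big /= mulr_sumr; apply: ler_sum => y _.
rewrite -mulr_suml -natr_sum sum_bool (col_count c y).
by [].
Qed.

Theorem lemma6 (R : realType) (q n a b : nat) :
  (2 <= q)%N -> (1 <= b)%N -> (a + q * b <= n - 1)%N ->
  kappa_star R (@chan q n a b) <= kappa_star R (@chan q n a.+2 b.-1).
Proof.
move=> q2 b1 hab.
have a2n : (a.+2 <= n)%N by nia.
have an : (a <= n)%N by lia.
set V1 := V (q - 1) (n - a) b.
set D := (q ^ a.+2 * V (q - 1) (n - a.+2) b.-1)%N.
have V10 : 0 < V1%:R :> R by rewrite ltr0n V_gt0.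
have D0 : 0 < D%:R :> R by rewrite ltr0n muln_gt0 V_gt0 expn_gt0; lia.
apply: (@le_trans _ _ ((q ^ (n - a))%:R / V1%:R)).
  have [z [z0 [cov zs]]] := feas R q b an.
  apply: ge_inf.
    exists 0 => s [z' [z'0 [_ ->]]]; exact: sumr_ge0.
  by exists z.
apply: (@le_trans _ _ ((q ^ n)%:R / D%:R)).
  rewrite ler_pdivrMr // mulrAC ler_pdivlMr // -!natrM ler_nat.
  have hv := @Vineq q (n - a) b q2 b1 ltac:(lia).
  rewrite /D /V1.
  have -> : (n - a.+2 = n - a - 2)%N by lia.
  have -> : b.-1 = (b - 1)%N by lia.
  have -> : (q ^ n = q ^ (n - a) * q ^ a)%N by rewrite -expnD subnK.
  rewrite -addn2 expnD.
  set P := (q ^ (n - a))%N; set Qa := (q ^ a)%N.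
  rewrite -!mulnA leq_mul2l; apply/orP; right.
  apply: leq_mul => //; rewrite mulnA; have -> : (q * q = q ^ 2)%N by rewrite expnS expn1.
  by [].
apply: lb_le_inf.
  have [z [z0 [cov zs]]] := feas R q b.-1 a2n.
  by exists ((q ^ (n - a.+2))%:R / (V (q - 1) (n - a.+2) b.-1)%:R); exists z.
move=> s [z [z0 [cov ->]]].
rewrite ler_pdivrMr // mulrC.
exact: lb.
Qed.
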